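(* Let $R$ be a principal ideal domain of odd or zero characteristic, let $V,W$ be free $R$-modules of finite rank, and let $\lambda=(\lambda_1,\dots,\lambda_l)$, $\mu=(\mu_1,\dots,\mu_m)$ be partitions of the same degree $r$. Define $\Phi_{\lambda,\mu}:\mathrm{Hom}_R(\Lambda^{\lambda}(V),\Lambda^{\mu}(W))\to\mathrm{Hom}_R(V^{\otimes r},W^{\otimes r})$ by $\phi\mapsto i_\mu\circ\phi\circ p_\lambda$. Then the image of $\Phi_{\lambda,\mu}$ equals $$\{\phi\in \mathrm{Hom}_R(V^{\otimes r},W^{\otimes r})\mid \tau_2\phi\tau_1=(-1)^{\tau_1}(-1)^{\tau_2}\phi\ \text{for all }\tau_1\in S_\lambda,\ \tau_2\in S_\mu\}.$$
   Context: For a tuple $\lambda=(\lambda_1,\dots,\lambda_l)$ of nonnegative integers with $|\lambda|=\lambda_1+\dots+\lambda_l=r$, $\Lambda^{\lambda}(V)=\Lambda^{\lambda_1}(V)\otimes\cdots\otimes\Lambda^{\lambda_l}(V)$. The embedding $i_p:\Lambda^p(V)\to V^{\otimes p}$ is $v_1\wedge\cdots\wedge v_p\mapsto\sum_{\sigma\in S_p}(-1)^\sigma v_{\sigma(1)}\otimes\cdots\otimes v_{\sigma(p)}$, and $i_\lambda=i_{\lambda_1}\otimes\cdots\otimes i_{\lambda_l}:\Lambda^\lambda(V)\to V^{\otimes r}$; $p_\lambda:V^{\otimes r}\to\Lambda^\lambda(V)$ is the canonical epimorphism (tensor product of the canonical projections $V^{\otimes\lambda_k}\to\Lambda^{\lambda_k}(V)$).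 $S_\lambda\le S_r$ is the Young subgroup preserving each of the consecutive intervals of $[1,r]$ of lengths $\lambda_1,\dots,\lambda_l$. The symmetric group $S_r$ acts on $V^{\otimes r}$ (and on $W^{\otimes r}$) by $\sigma(v_1\otimes\cdots\otimes v_r)=v_{\sigma^{-1}(1)}\otimes\cdots\otimes v_{\sigma^{-1}(r)}$, and $(-1)^\tau$ is the sign of $\tau$. *)

(* Defs.v *)
(* Free modules of finite rank are modelled by their standard
   coordinates: V = R^n, W = R^k, and R-linear maps between free modules with
   finite bases I, J are given by their coefficient functions (matrices). *)
From HB Require Import structures.
From mathcomp Require Import all_boot all_order all_algebra all_fingroup.
Set Implicit Arguments.
Unset Strict Implicit.
Unset Printing Implicit Defensive.
Import GRing.Theory.
Local Open Scope ring_scope.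

Definition is_ideal (R : comPzRingType) (I : R -> Prop) : Prop :=
  [/\ I 0, (forall x y, I x -> I y -> I (x + y)) & (forall a x, I x -> I (a * x))].

Definition principal_ideal_domain (R : idomainType) : Prop :=
  forall I : R -> Prop, is_ideal I -> exists a : R, forall x, I x <-> exists b, x = b * a.

Definition odd_or_zero_char (R : idomainType) : Prop :=
  forall p : nat, p \in [pchar R] -> odd p.

(* rhom R I J = Hom_R(R^(I), R^(J)); f j i = coefficient of e_j in f(e_i) *)
Definition rhom (R : Type) (I J : Type) := J -> I -> R.

Definition mcomp (R : nzSemiRingType) (I J K : finType) (A : rhom R J K) (B : rhom R I J)
  : rhom R I K := fun c a => \sum_(b : J) A c b * B b a.

(* basis of (R^n)^{⊗ r}: words u : [0,r) -> [0,n), e_u = e_{u 0} ⊗ ... ⊗ e_{u (r-1)} *)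
Notation word r n := {ffun 'I_r -> 'I_n}.

(* S_r acts on tensors: s(v_1⊗...⊗v_r) = v_{s^-1(1)}⊗...⊗v_{s^-1(r)},
   i.e. e_u |-> e_{u o s^-1} *)
Definition permact (R : nzSemiRingType) (r n : nat) (s : 'S_r)
  : rhom R (word r n) (word r n) :=
  fun u' u => (u' == [ffun i => u (s^-1 i)]%g)%:R.

(* index (0-based) of the consecutive interval of lengths lam_1, lam_2, ...
   containing position i *)
Definition blk (lam : seq nat) (r : nat) (i : 'I_r) : nat :=
  count (fun s => s <= i)%N (scanl addn 0%N lam).

Definition young (lam : seq nat) (r : nat) : {set 'S_r} :=
  [set s : 'S_r | [forall i, blk lam (s i) == blk lam i]].

(* its standard basis: e_{t_1} ∧ ... (block 1) ⊗ ... ⊗ (block l) with t strictly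
   increasing inside every block *)
Definition blockinc (lam : seq nat) (r n : nat) (t : word r n) : bool :=
  [forall i : 'I_r, forall j : 'I_r,
     ((blk lam i == blk lam j) && (i < j)%N) ==> (t i < t j)%N].

Notation ext_idx lam r n := {t : word r n | blockinc lam t}.

Definition wedge_coef (R : nzRingType) (lam : seq nat) (r n : nat)
  (t : ext_idx lam r n) (u : word r n) : R :=
  \sum_(s in young lam r) (-1) ^+ s * (u == [ffun i => val t (s i)])%:R.

(* i_lam : Lambda^lam(R^n) -> (R^n)^{⊗r},
   v_1∧...∧v_p |-> sum_s (-1)^s v_{s 1}⊗...⊗v_{s p} blockwise *)
Definition incl (R : nzRingType) (lam : seq nat) (r n : nat)
  : rhom R (ext_idx lam r n) (word r n) := fun u t => @wedge_coef R lam r n t u.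

(* p_lam : (R^n)^{⊗r} -> Lambda^lam(R^n), canonical projection
   e_{u_1}⊗...⊗e_{u_r} |-> (e_{u_1}∧...)⊗...; in the standard basis this is
   (-1)^s e_t if u = t o s with s in S_lam, and 0 otherwise *)
Definition proj (R : nzRingType) (lam : seq nat) (r n : nat)
  : rhom R (word r n) (ext_idx lam r n) := fun t u => @wedge_coef R lam r n t u.

Definition Phi (R : nzRingType) (lam mu : seq nat) (r n k : nat)
  (psi : rhom R (ext_idx lam r n) (ext_idx mu r k)) : rhom R (word r n) (word r k) :=
  mcomp (mcomp (@incl R mu r k) psi) (@proj R lam r n).

(* Main.v *)
Require Import Defs.
From HB Require Import structures.
From mathcomp Require Import all_boot all_order all_algebra all_fingroup.
From mathcomp Require Import zify ring.
Set Implicit Arguments.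
Unset Strict Implicit.
Import GRing.Theory.
Local Open Scope ring_scope.

Lemma swap_ineq (i j a c S : nat) : (i < j -> c < a ->
  i * a + (j * c + S) < i * c + (j * a + S))%N.
Proof.
move=> Lij Lca.
rewrite -(subnK (ltnW Lij)) -(subnK (ltnW Lca)).
have : (0 < (j - i) * (a - c))%N by rewrite muln_gt0 !subn_gt0 Lij Lca.
move: (j - i)%N (a - c)%N => e d Hed.
rewrite !mulnDl !mulnDr.
lia.
Qed.

Section Aux.
Variable R : idomainType.
Variables (lam : seq nat) (r : nat).
Local Notation b := (@blk lam r).
Local Notation G := (young lam r).
Local Notation sgn s := ((-1) ^+ odd_perm s : R).

Definition act n (u : word r n) (s : 'S_r) : word r n := [ffun i => u (s i)].

Lemma inGP (s : 'S_r) : reflect (forall i, b (s i) = b i) (s \in G).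
Proof.
rewrite inE; apply: (iffP forallP) => H i; apply/eqP; exact: H.
Qed.

Lemma G1 : (1%g : 'S_r) \in G.
Proof. by apply/inGP => i; rewrite perm1. Qed.

Lemma GM (s t : 'S_r) : s \in G -> t \in G -> (s * t)%g \in G.
Proof. by move=> /inGP Hs /inGP Ht; apply/inGP => i; rewrite permM Ht Hs. Qed.

Lemma GV (s : 'S_r) : s \in G -> (s^-1)%g \in G.
Proof. by move/inGP=> Hs; apply/inGP => i; rewrite -[in RHS](permKV s i) Hs. Qed.

Lemma Gtperm i j : b i = b j -> tperm i j \in G.
Proof.
move=> H; apply/inGP => k; case: tpermP => [->|->|] //.
Qed.

Lemma actE n (u : word r n) (s : 'S_r) i : act u s i = u (s i).
Proof. by rewrite ffunE. Qed.

Lemma act1 n (u : word r n) : act u 1%g = u.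
Proof. by apply/ffunP => i; rewrite ffunE perm1. Qed.

Lemma actM n (u : word r n) (s t : 'S_r) : act u (s * t)%g = act (act u t) s.
Proof. by apply/ffunP => i; rewrite !ffunE permM. Qed.

Lemma actK n (s : 'S_r) : cancel (fun u : word r n => act u s) (fun u => act u s^-1).
Proof. by move=> u; rewrite -actM mulVg act1. Qed.

Lemma actKV n (s : 'S_r) : cancel (fun u : word r n => act u s^-1) (fun u => act u s).
Proof. by move=> u; rewrite -actM mulgV act1. Qed.

Lemma act_inj_eq n (u v : word r n) (s : 'S_r) : (act u s == act v s) = (u == v).
Proof. exact: (can_eq (actK s)). Qed.

Lemma act_swap n (y c : word r n) (s : 'S_r) : (y == act c s^-1) = (c == act y s).
Proof.
apply/eqP/eqP => [->|->]; [by rewrite actKV | by rewrite actK].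
Qed.

Lemma signM (s t : 'S_r) : sgn (s * t)%g = sgn s * sgn t.
Proof. by rewrite odd_permM signr_addb. Qed.

Lemma blockincP n (t : word r n) : blockinc lam t ->
  forall i j, b i = b j -> (i < j)%N -> (t i < t j)%N.
Proof.
move=> /forallP H i j Eb Lij; move: (H i) => /forallP /(_ j) /implyP; apply.
by rewrite Eb eqxx.
Qed.

Lemma binc_inj n (t : word r n) a c : blockinc lam t -> b a = b c -> t a = t c -> a = c.
Proof.
move=> Ht Eb Et; case: (ltngtP a c) => [L|L|E]; last exact: val_inj.
- by have := blockincP Ht Eb L; rewrite Et ltnn.
- by have := blockincP Ht (esym Eb) L; rewrite Et ltnn.
Qed.

Lemma core n (t t' : word r n) (g : 'S_r) : blockinc lam t -> blockinc lam t' -> g \in G ->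
  t = act t' g -> g = 1%g.
Proof.
move=> Ht Ht' /inGP Hg E.
have mono : forall i j, b i = b j -> (i < j)%N -> (g i < g j)%N.
  move=> i j Eb Lij; have := blockincP Ht Eb Lij; rewrite E !ffunE => Ltt.
  case: (ltngtP (g i) (g j)) => // [Lgt|Eg].
  - have := blockincP Ht' (_ : b (g j) = b (g i)) Lgt.
    by rewrite ltnNge (ltnW Ltt); apply; rewrite !Hg Eb.
  - have /perm_inj Eij : g i = g j by apply: val_inj.
    by rewrite Eij ltnn in Lij.
apply/permP => i; rewrite perm1.
suff H : forall m (i : 'I_r), (i < m)%N -> g i = i by apply: (H i.+1).
elim=> [//|m IH] i' Li'.
rewrite ltnS leq_eqVlt in Li'; case/orP: Li' => [/eqP Ei | /IH //].
have IH' : forall j : 'I_r, (j < i')%N -> g j = j by move=> j; rewrite Ei; apply: IH.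
pose j := (g^-1)%g i'.
have gj : g j = i' by rewrite /j permKV.
case: (ltngtP j i') => [Lj | Lj | Ej].
- by move: (IH' j Lj); rewrite gj => Eji; rewrite Eji ltnn in Lj.
- case: (ltngtP (g i') i') => [Lk|Lk|Ek]; last exact: val_inj.
  + have := IH' _ Lk => /perm_inj Ek. by rewrite Ek ltnn in Lk.
  + have Eb : b i' = b j by rewrite -[in LHS]gj Hg.
    by have := mono _ _ Eb Lj; rewrite gj ltnNge (ltnW Lk).
- have Ej' : j = i' by apply: val_inj.
  by rewrite -[in LHS]Ej' gj.
Qed.

Lemma wc_decomp n (t0 t : ext_idx lam r n) (s0 : 'S_r) : s0 \in G ->
  wedge_coef R t (act (val t0) s0) = if t == t0 then sgn s0 else 0.
Proof.
move=> Gs0.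
have key : forall s, s \in G -> act (val t0) s0 = act (val t) s -> t = t0 /\ s = s0.
  move=> s Gs E.
  have Et : val t = act (val t0) (s^-1 * s0)%g by rewrite actM E actK.
  have g1 := core (valP t) (valP t0) (GM (GV Gs) Gs0) Et.
  have Es : s0 = s by move: g1 => /(congr1 (mulg s)); rewrite mulgA mulgV mul1g mulg1.
  split; last by [].
  by apply: val_inj; rewrite Et g1 act1.
rewrite /wedge_coef; case: eqP => [Et|Ne].
- subst t.
  rewrite (bigD1 s0) //= eqxx mulr1 big1 ?addr0 // => s /andP [Gs Ns].
  case: eqP => [E|]; last by rewrite mulr0.
  by have [_ Es] := key s Gs E; rewrite Es eqxx in Ns.
- apply: big1 => s Gs; case: eqP => [E|]; last by rewrite mulr0.
  by have [Et _] := key s Gs E.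
Qed.

Lemma wc_act n (t : ext_idx lam r n) (x : word r n) (g : 'S_r) : g \in G ->
  wedge_coef R t (act x g) = sgn g * wedge_coef R t x.
Proof.
move=> Gg; rewrite /wedge_coef mulr_sumr (reindex_inj (mulgI g)) /=.
apply: eq_big => [s|s Gs].
- apply/idP/idP => [H|H]; last exact: GM.
  by rewrite -(mulKg g s); apply: GM (GV Gg) H.
- rewrite (_ : [ffun i => val t ((g * s)%g i)] = act (act (val t) s) g); last first.
    by apply/ffunP => i; rewrite !ffunE permM.
  by rewrite act_inj_eq signM mulrA.
Qed.

Lemma wc_rep n (t : ext_idx lam r n) (x : word r n) i j :
  i != j -> b i = b j -> x i = x j -> wedge_coef R t x = 0.
Proof.
move=> Nij Eb Ex; apply: big1 => s /inGP Gs; case: eqP => [E|]; last by rewrite mulr0.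
have : val t (s i) = val t (s j) by move: Ex; rewrite E !ffunE.
move/(binc_inj (valP t)); rewrite !Gs => /(_ Eb) /perm_inj Eij.
by rewrite Eij eqxx in Nij.
Qed.

Lemma decomp n (x : word r n) :
  (exists t0 : ext_idx lam r n, exists2 s0, s0 \in G & x = act (val t0) s0) \/
  (exists i j, [/\ i != j, b i = b j & x i = x j]).
Proof.
pose P (s : 'S_r) := (\sum_(i < r) i * act x s i)%N.
have [s Gs Hmax] := @arg_maxnP _ (1%g : 'S_r) (fun s => s \in G) P G1.
set t := act x s.
case Hb: (blockinc lam t).
  left; exists (exist _ t Hb); exists (s^-1)%g; first exact: GV.
  by rewrite /= /t actK.
move/negbT: Hb; rewrite negb_forall => /existsP [i]; rewrite negb_forall => /existsP [j].
rewrite negb_imply => /andP [/andP [/eqP Eb Lij] Nt].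
have Hs := inGP _ Gs.
rewrite -leqNgt leq_eqVlt in Nt; case/orP: Nt => [/eqP Etij | Ltji].
  right; exists (s i), (s j); split.
  - by apply/eqP => /perm_inj E; rewrite E ltnn in Lij.
  - by rewrite !Hs Eb.
  - by apply/esym/val_inj; move: Etij; rewrite /t !ffunE.
have Nij : i != j by apply/eqP => E; rewrite E ltnn in Lij.
have Gt : (tperm i j * s)%g \in G by apply: GM => //; apply: Gtperm.
suff L : (P s < P (tperm i j * s)%g)%N by move: (Hmax _ Gt); rewrite /= leqNgt L.
have Sij : forall F : 'I_r -> nat,
  (\sum_k F k = F i + (F j + \sum_(k | (k != i) && (k != j)) F k))%N.
  by move=> F; rewrite (bigD1 i) // (bigD1 j) /= 1?eq_sym.
rewrite /P !Sij.
rewrite [X in (_ < _ + (_ + X))%N](eq_bigr (fun k : 'I_r => k * act x s k)%N); last first.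
  move=> k /andP [Ni Nj]; rewrite !ffunE permM tpermD // eq_sym //.
move: Ltji; rewrite /t /act !ffunE => Ltji; rewrite !permM tpermL tpermR.
set S := (\sum_(k | _) _)%N.
exact: (@swap_ineq i j (x (s i)) (x (s j)) S Lij Ltji).
Qed.

Lemma sum_ifr (T : finType) (F : T -> R) a0 c :
  \sum_a F a * (if a == a0 then c else 0) = F a0 * c.
Proof.
by rewrite (bigD1 a0) //= eqxx big1 ?addr0 // => a /negbTE ->; rewrite mulr0.
Qed.

Lemma sum_ifl (T : finType) (F : T -> R) a0 c :
  \sum_a (if a == a0 then c else 0) * F a = c * F a0.
Proof.
by rewrite (bigD1 a0) //= eqxx big1 ?addr0 // => a /negbTE ->; rewrite mul0r.
Qed.

Lemma sum_deltar (T : finType) (F : T -> R) a0 :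
  \sum_a F a * (a == a0)%:R = F a0.
Proof.
by rewrite (bigD1 a0) //= eqxx mulr1 big1 ?addr0 // => a /negbTE ->; rewrite mulr0.
Qed.

Lemma sum_deltal (T : finType) (F : T -> R) a0 :
  \sum_a (a == a0)%:R * F a = F a0.
Proof.
by rewrite (bigD1 a0) //= eqxx mul1r big1 ?addr0 // => a /negbTE ->; rewrite mul0r.
Qed.

Lemma permact_comp n k (f : rhom R (word r n) (word r k)) (t1 t2 : 'S_r) y x :
  mcomp (mcomp (@permact R r k t2) f) (@permact R r n t1) y x
  = f (act y t2) (act x t1^-1).
Proof.
rewrite /mcomp /permact sum_deltar.
under eq_bigr => c _ do rewrite (act_swap y c t2).
by rewrite sum_deltal.
Qed.

End Aux.

Theorem lemma1p1 (R : idomainType)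
  (hpid : principal_ideal_domain R) (hchar : odd_or_zero_char R)
  (n k r : nat) (lam mu : seq nat)
  (hlam : sorted geq lam) (hmu : sorted geq mu)
  (slam : sumn lam = r) (smu : sumn mu = r)
  (f : rhom R (word r n) (word r k)) :
  (exists psi : rhom R (ext_idx lam r n) (ext_idx mu r k),
      forall y x, Phi psi y x = f y x)
  <->
  (forall (t1 t2 : 'S_r), t1 \in young lam r -> t2 \in young mu r ->
     forall y x, mcomp (mcomp (@permact R r k t2) f) (@permact R r n t1) y x
                 = (-1) ^+ t1 * (-1) ^+ t2 * f y x).
Proof.
split.
- move=> [psi Hpsi] t1 t2 G1 G2 y x.
  rewrite permact_comp -!Hpsi /Phi /mcomp /incl /proj.
  under eq_bigr => a _ do under eq_bigr => c _ do rewrite (wc_act _ _ _ G2).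
  under eq_bigr => a _ do rewrite (wc_act _ _ _ (GV G1)) odd_permV.
  rewrite mulr_sumr; apply: eq_bigr => a _.
  under eq_bigr => c _ do rewrite -mulrA.
  rewrite -mulr_sumr.
  by rewrite mulrACA (mulrC ((-1) ^+ odd_perm t2)).
- move=> Hinv.
  have two : (2%:R : R) != 0.
    apply/negP => /eqP H2; have := hchar 2; rewrite inE /= H2 eqxx /=.
    by move=> /(_ isT).
  have zero : forall z : R, z = - z -> z = 0.
    move=> z E; have : (2%:R : R) * z = 0 by rewrite mulr2n mulrDl mul1r {1}E addNr.
    by move/eqP; rewrite mulf_eq0 (negbTE two) /= => /eqP.
  have actτ : forall m (u : word r m) i j, u i = u j -> act u (tperm i j) = u.
    move=> m u i j E; apply/ffunP => l; rewrite ffunE.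
    by case: tpermP => [->|->|].
  have Hzx : forall y' (x' : word r n) i j, i != j -> blk lam i = blk lam j ->
      x' i = x' j -> f y' x' = 0.
    move=> y' x' i j Nij Eb Ex; apply: zero.
    have := Hinv (tperm i j) 1%g (Gtperm Eb) (G1 mu r) y' x'.
    rewrite permact_comp act1 tpermV actτ // odd_tperm Nij odd_perm1 => Hf.
    by rewrite {1}Hf /= expr1 expr0 mulr1 mulN1r.
  have Hzy : forall (y' : word r k) x' i j, i != j -> blk mu i = blk mu j ->
      y' i = y' j -> f y' x' = 0.
    move=> y' x' i j Nij Eb Ey; apply: zero.
    have := Hinv 1%g (tperm i j) (G1 lam r) (Gtperm Eb) y' x'.
    rewrite permact_comp invg1 act1 actτ // odd_tperm Nij odd_perm1 => Hf.
    by rewrite {1}Hf /= expr1 expr0 mul1r mulN1r.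
  exists (fun t' t => f (val t') (val t)) => y x.
  case: (decomp lam x) => [[t0 [s0 Gs0 ->]] | [i [j [Nij Eb Ex]]]]; last first.
    rewrite (Hzx y x i j Nij Eb Ex) /Phi /mcomp /incl /proj.
    by apply: big1 => a _; rewrite (@wc_rep _ _ _ _ _ _ _ _ Nij Eb Ex) mulr0.
  case: (decomp mu y) => [[t0' [s0' Gs0' ->]] | [i [j [Nij Eb Ey]]]]; last first.
    rewrite (Hzy y _ i j Nij Eb Ey) /Phi /mcomp /incl /proj.
    apply: big1 => a _; rewrite big1 ?mul0r // => c _.
    by rewrite (@wc_rep _ _ _ _ _ _ _ _ Nij Eb Ey) mul0r.
  rewrite /Phi /mcomp /incl /proj.
  under eq_bigr => a _ do under eq_bigr => c _ do rewrite (@wc_decomp _ _ _ _ _ _ _ Gs0').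
  under eq_bigr => a _ do rewrite sum_ifl (@wc_decomp _ _ _ _ _ _ _ Gs0).
  rewrite sum_ifr.
  have := Hinv (s0^-1)%g s0' (GV Gs0) Gs0' (val t0') (val t0).
  rewrite permact_comp invgK odd_permV => ->.
  by rewrite mulrC mulrA.
Qed.
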